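(* Let $Z=\{z_n\}_{n\in\mathbb{N}}$, $W=\{w_m\}_{m\in\mathbb{N}}$ be almost periodic divisors in a strip $S$. Then for any $\varepsilon>0$ and any substrip $S^0\subset S$ with $\operatorname{dist}(S^0,\partial S)>\varepsilon$, there is a relatively dense set $E\subset\mathbb{R}$ such that for every $\tau\in E$ there are bijections $\sigma_Z,\sigma_W:\mathbb{N}\to\mathbb{N}$ such that for all $z_j\in|Z|\cap S^0$ and all $w_r\in|W|\cap S^0$: $$|z_j+i\tau-z_{\sigma_Z(j)}|<\varepsilon,\quad |w_r+i\tau-w_{\sigma_W(r)}|<\varepsilon,$$ $$|z_j-i\tau-z_{\sigma_Z^{-1}(j)}|<\varepsilon,\quad |w_r-i\tau-w_{\sigma_W^{-1}(r)}|<\varepsilon.$$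
   Context: A (vertical) strip is a set $\{z\in\mathbb{C}: a<\operatorname{Re} z<b\}$ with $-\infty\le a<b\le\infty$; a substrip of $S$ is a strip of this form contained in $S$. A divisor in $S$ is a sequence $\{z_j\}\subset S$ without limit points in $S$ (points may repeat finitely often, encoding multiplicity); $|Z|$ denotes its set of points. A set $E\subset\mathbb{R}$ is relatively dense if there is $L<\infty$ with $E\cap[\alpha,\alpha+L]\ne\emptyset$ for every $\alpha\in\mathbb{R}$. A divisor $Z=\{z_j\}$ in $S$ is almost periodic if for every $\varepsilon>0$ and every substrip $S^0$ with $\overline{S^0}\subset S$, the set of all $\tau\in\mathbb{R}$ for which there exists a bijection $\sigma:\mathbb{N}\to\mathbb{N}$ such that for every $j$, ($z_j\in S^0$ or $z_{\sigma(j)}\in S^0$) implies $|z_j+i\tau-z_{\sigma(j)}|<\varepsilon$, is relatively dense. *)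

(* Defs.v *)
From Stdlib Require Import Reals.
From Coquelicot Require Import Coquelicot.
Open Scope R_scope.

(* The strip {z : a < Re z < b}, with a, b in [-oo, +oo]. *)
Record strip := Strip { s_lo : Rbar ; s_hi : Rbar ; s_lt : Rbar_lt s_lo s_hi }.

Definition in_strip (S : strip) (z : C) : Prop :=
  Rbar_lt (s_lo S) (Finite (Re z)) /\ Rbar_lt (Finite (Re z)) (s_hi S).

Definition in_strip_closure (S : strip) (z : C) : Prop :=
  Rbar_le (s_lo S) (Finite (Re z)) /\ Rbar_le (Finite (Re z)) (s_hi S).

Definition substrip (S0 S : strip) : Prop :=
  forall z, in_strip S0 z -> in_strip S z.

Definition divisor_in (S : strip) (Z : nat -> C) : Prop :=
  (forall j, in_strip S (Z j)) /\
  (forall w, in_strip S w ->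
     exists r, 0 < r /\ exists N, forall j, (N <= j)%nat -> r <= Cmod (Z j - w)%C).

Definition rel_dense (E : R -> Prop) : Prop :=
  exists L : R, forall alpha : R, exists t, E t /\ alpha <= t <= alpha + L.

Definition bijective_nat (s : nat -> nat) : Prop :=
  exists s' : nat -> nat, (forall n, s' (s n) = n) /\ (forall n, s (s' n) = n).

Definition ishift (z : C) (tau : R) : C := (z + Ci * RtoC tau)%C.

Definition almost_periodic_divisor (S : strip) (Z : nat -> C) : Prop :=
  divisor_in S Z /\
  forall (eps : R) (S0 : strip), 0 < eps ->
    (forall z, in_strip_closure S0 z -> in_strip S z) ->
    rel_dense (fun tau => exists sigma : nat -> nat, bijective_nat sigma /\
      forall j, (in_strip S0 (Z j) \/ in_strip S0 (Z (sigma j))) ->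
        Cmod (ishift (Z j) tau - Z (sigma j))%C < eps).

(* dist(S0, boundary S) > eps, where boundary S consists of the finite
   vertical lines Re z = a, Re z = b (dist to the empty set is +oo). *)
Definition dist_boundary_gt (S0 S : strip) (eps : R) : Prop :=
  (s_lo S = m_infty \/ Rbar_lt (Rbar_plus (s_lo S) (Finite eps)) (s_lo S0)) /\
  (s_hi S = p_infty \/ Rbar_lt (s_hi S0) (Rbar_plus (s_hi S) (Finite (- eps)))).

(* Main.v *)
Require Import Defs.
From Stdlib Require Import Reals Lra Lia Classical.
From Coquelicot Require Import Coquelicot.
Open Scope R_scope.

Lemma CC1 z w t : Rabs (Re w - Re z) <= Cmod (ishift z t - w)%C.
Proof.
  eapply Rle_trans; [|apply re_le_Cmod].
  unfold ishift; simpl. right. rewrite <- Rabs_Ropp. f_equal. destruct z, w; simpl. ring.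
Qed.

Lemma CC2 z w1 w2 t1 t2 :
  Cmod (ishift z (t1+t2) - w2)%C <= Cmod (ishift z t1 - w1)%C + Cmod (ishift w1 t2 - w2)%C.
Proof.
  replace (ishift z (t1+t2) - w2)%C with ((ishift z t1 - w1) + (ishift w1 t2 - w2))%C.
  apply Cmod_triangle. unfold ishift. rewrite RtoC_plus. ring.
Qed.

Lemma CC3 z w t : Cmod (ishift w (-t) - z)%C = Cmod (ishift z t - w)%C.
Proof.
  rewrite <- Cmod_opp. f_equal. unfold ishift. rewrite RtoC_opp. ring.
Qed.

Lemma CC4 z w t h : Cmod (ishift z (t+h) - w)%C <= Cmod (ishift z t - w)%C + Rabs h.
Proof.
  replace (ishift z (t+h) - w)%C with ((ishift z t - w) + Ci * RtoC h)%C.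
  eapply Rle_trans; [apply Cmod_triangle|]. rewrite Cmod_mult.
  replace (Cmod Ci) with 1. rewrite Cmod_R. lra.
  unfold Cmod, Ci; simpl. replace ((0*(0*1) + 1*(1*1))) with 1 by ring. now rewrite sqrt_1.
  unfold ishift. rewrite RtoC_plus. ring.
Qed.

Definition good (Z:nat->C) (S':strip) (t d:R) (s s':nat->nat) :=
 (forall n, s' (s n) = n) /\ (forall n, s (s' n) = n) /\
 forall j, (in_strip S' (Z j) \/ in_strip S' (Z (s j))) ->
   Cmod (ishift (Z j) t - Z (s j))%C < d.

Lemma good_inv Z S' t d s s' : good Z S' t d s s' -> good Z S' (-t) d s' s.
Proof.
  intros [h1 [h2 h3]]. split; [exact h2|split; [exact h1|]].
  intros j Hj. rewrite CC3. rewrite <- (h2 j) at 2. apply h3.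
  rewrite (h2 j). tauto.
Qed.

Lemma good_comp Z S0 S1 d t1 t2 s1 s1' s2 s2' :
  0 < d ->
  (forall z w, in_strip S0 z -> Rabs (Re w - Re z) < d -> in_strip S1 w) ->
  good Z S1 t1 d s1 s1' -> good Z S1 t2 d s2 s2' ->
  good Z S0 (t1+t2) (2*d) (fun n => s2 (s1 n)) (fun n => s1' (s2' n)).
Proof.
  intros hd nb [a1 [a2 a3]] [b1 [b2 b3]].
  split; [intros; now rewrite b1, a1|split; [intros; now rewrite a2, b2|]].
  intros j Hj.
  assert (P: Cmod (ishift (Z j) t1 - Z (s1 j))%C < d /\
             Cmod (ishift (Z (s1 j)) t2 - Z (s2 (s1 j)))%C < d).
  { destruct Hj as [Hj|Hj].
    - assert (Hj1 : in_strip S1 (Z j)) by (apply (nb (Z j)); auto; rewrite Rminus_diag, Rabs_R0; lra).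
      assert (A := a3 j (or_introl Hj1)).
      split; auto. apply b3. left. apply (nb (Z j)); auto.
      exact (Rle_lt_trans _ _ _ (CC1 _ _ t1) A).
    - assert (Hj1 : in_strip S1 (Z (s2 (s1 j)))) by (apply (nb _ _ Hj); rewrite Rminus_diag, Rabs_R0; lra).
      assert (B := b3 (s1 j) (or_intror Hj1)).
      split; auto. apply a3. right. apply (nb _ _ Hj).
      rewrite <- Rabs_Ropp, Ropp_minus_distr.
      exact (Rle_lt_trans _ _ _ (CC1 _ _ t2) B). }
  destruct P. eapply Rle_lt_trans; [apply (CC2 _ (Z (s1 j)))|]. lra.
Qed.

Lemma good_pert Z S' t d e h s s' : good Z S' t d s s' -> Rabs h < e -> good Z S' (t+h) (d+e) s s'.
Proof.
  intros [a1 [a2 a3]] he. split; auto. split; auto. intros j Hj.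
  eapply Rle_lt_trans; [apply CC4|]. specialize (a3 j Hj). lra.
Qed.

Lemma good_mono Z S' t d e s s' : good Z S' t d s s' -> d <= e -> good Z S' t e s s'.
Proof. intros [a1 [a2 a3]] he. split; auto. split; auto. intros j Hj. specialize (a3 j Hj). lra. Qed.

Lemma enlarge S0 S eps : 0 < eps -> dist_boundary_gt S0 S eps ->
  exists S1, (forall z, in_strip_closure S1 z -> in_strip S z) /\
   (forall z w, in_strip S0 z -> Rabs (Re w - Re z) < eps/2 -> in_strip S1 w).
Proof.
  intros he [hl hh].
  destruct S0 as [l0 h0 lt0]. destruct S as [l h lt]. simpl in *.
  set (l1 := match l0 with Finite x => Finite (x - eps/2) | e => e end).
  set (h1 := match h0 with Finite x => Finite (x + eps/2) | e => e end).
  assert (lt1 : Rbar_lt l1 h1).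
  { unfold l1, h1. destruct l0, h0; simpl in *; auto; lra. }
  exists (Strip l1 h1 lt1). unfold in_strip, in_strip_closure; simpl. split.
  - intros z [z1 z2]. unfold l1, h1 in *. split.
    + destruct hl as [hl|hl]; [subst; exact I|].
      destruct l, l0; simpl in *; try contradiction; lra.
    + destruct hh as [hh|hh]; [subst; exact I|].
      destruct h, h0; simpl in *; try contradiction; lra.
  - intros z w [z1 z2] hw. apply Rabs_def2 in hw. unfold l1, h1.
    split; destruct l0; try destruct h0; simpl in *; try contradiction; auto; lra.
Qed.

Lemma finite_reps (Q : nat -> R -> R -> Prop) : forall N, exists M, 0 <= M /\
  forall m, (m <= N)%nat -> (exists a b, Q m a b) ->
    exists a b, Q m a b /\ Rabs a <= M /\ Rabs b <= M.
Proof.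
  induction N as [|N IH].
  - destruct (classic (exists a b, Q 0%nat a b)) as [[a [b H]]|H].
    + exists (Rmax (Rabs a) (Rabs b)). split.
      { eapply Rle_trans; [apply Rabs_pos|apply Rmax_l]. }
      intros m hm _. assert (m = 0%nat) by lia. subst.
      exists a, b. split; auto. split; [apply Rmax_l|apply Rmax_r].
    + exists 0. split; [lra|]. intros m hm H'. assert (m = 0%nat) by lia. subst. tauto.
  - destruct IH as [M [hM IH]].
    destruct (classic (exists a b, Q (S N) a b)) as [[a [b H]]|H].
    + exists (Rmax M (Rmax (Rabs a) (Rabs b))). split.
      { eapply Rle_trans; [exact hM|apply Rmax_l]. }
      intros m hm Hm. destruct (Nat.eq_dec m (S N)) as [->|ne].
      * exists a, b. split; auto. split; eapply Rle_trans; [|apply Rmax_r| |apply Rmax_r];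
        [apply Rmax_l|apply Rmax_r].
      * destruct (IH m ltac:(lia) Hm) as [a' [b' [q [h1 h2]]]].
        exists a', b'. split; auto. split; eapply Rle_trans; eauto; apply Rmax_l.
    + exists M. split; auto. intros m hm Hm. destruct (Nat.eq_dec m (S N)) as [->|ne].
      * tauto.
      * apply IH; auto; lia.
Qed.

Lemma bin_mul d y m : 0 < d -> INR m <= y / d < INR m + 1 ->
  INR m * d <= y < INR m * d + d.
Proof.
  intros hd [h1 h2]. set (q := y/d) in *.
  assert (y = q * d) by (unfold q; field; lra). rewrite H.
  split; nra.
Qed.

Theorem lemma2 (S : strip) (Z W : nat -> C) :
  almost_periodic_divisor S Z -> almost_periodic_divisor S W ->
  forall (eps : R) (S0 : strip), 0 < eps -> substrip S0 S ->
  dist_boundary_gt S0 S eps ->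
  exists E : R -> Prop, rel_dense E /\
    forall tau, E tau ->
      exists sZ sZinv sW sWinv : nat -> nat,
        (forall n, sZinv (sZ n) = n) /\ (forall n, sZ (sZinv n) = n) /\
        (forall n, sWinv (sW n) = n) /\ (forall n, sW (sWinv n) = n) /\
        (forall j, in_strip S0 (Z j) ->
           Cmod (ishift (Z j) tau - Z (sZ j))%C < eps /\
           Cmod (ishift (Z j) (- tau) - Z (sZinv j))%C < eps) /\
        (forall r, in_strip S0 (W r) ->
           Cmod (ishift (W r) tau - W (sW r))%C < eps /\
           Cmod (ishift (W r) (- tau) - W (sWinv r))%C < eps).
Proof.
  intros [_ apZ] [_ apW] eps S0 he _ db.
  destruct (enlarge S0 S eps he db) as [S1 [cl nb]].
  set (d := eps/4).
  assert (hd : 0 < d) by (unfold d; lra).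
  assert (nb' : forall z w, in_strip S0 z -> Rabs (Re w - Re z) < d -> in_strip S1 w).
  { intros z w hz hw. apply (nb z w hz). unfold d in hw; lra. }
  destruct (apZ d S1 hd cl) as [Lz HZ].
  destruct (apW d S1 hd cl) as [Lw HW].
  set (Pz := fun t => exists s s', good Z S1 t d s s').
  set (Pw := fun t => exists s s', good W S1 t d s s').
  assert (HZ' : forall al, exists t, Pz t /\ al <= t <= al + Lz).
  { intros al. destruct (HZ al) as [t [[s [[s' [h1 h2]] h3]] ht]].
    exists t. split; auto. exists s, s'. split; auto. }
  assert (HW' : forall al, exists t, Pw t /\ al <= t <= al + Lw).
  { intros al. destruct (HW al) as [t [[s [[s' [h1 h2]] h3]] ht]].
    exists t. split; auto. exists s, s'. split; auto. }
  clear HZ HW.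
  assert (hLz : 0 <= Lz) by (destruct (HZ' 0) as [t [_ ht]]; lra).
  assert (hLw : 0 <= Lw) by (destruct (HW' 0) as [t [_ ht]]; lra).
  set (Q := fun m a b => Pz a /\ Pw b /\ INR m * d <= a - b + Lw < INR m * d + d).
  assert (hx0 : 0 <= (Lz + Lw) / d) by (apply Rdiv_le_0_compat; lra).
  destruct (nfloor_ex _ hx0) as [N [hN1 hN2]].
  destruct (finite_reps Q N) as [M [hM HM]].
  exists (fun tau => (exists s s', good Z S0 tau eps s s') /\ (exists s s', good W S0 tau eps s s')).
  split.
  - exists (2*M + Lz). intros al.
    destruct (HZ' (al + M)) as [a [pa ha]].
    destruct (HW' (al + M)) as [b [pb hb]].
    assert (hx : 0 <= (a - b + Lw) / d) by (apply Rdiv_le_0_compat; lra).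
    destruct (nfloor_ex _ hx) as [m hm].
    assert (hmN : (m <= N)%nat).
    { assert (INR m < INR (Datatypes.S N)).
      { rewrite S_INR. apply Rle_lt_trans with ((a - b + Lw) / d); [lra|].
        apply Rle_lt_trans with ((Lz+Lw)/d); [|lra].
        unfold Rdiv. apply Rmult_le_compat_r; [left; apply Rinv_0_lt_compat; lra|lra]. }
      apply INR_lt in H. lia. }
    assert (qm : Q m a b).
    { split; auto. split; auto. apply bin_mul; auto. }
    destruct (HM m hmN (ex_intro _ a (ex_intro _ b qm))) as [a' [b' [[pa' [pb' qb]] [ha' hb']]]].
    destruct qm as [_ [_ qa]].
    destruct pa as [s1 [s1' g1]]. destruct pa' as [s2 [s2' g2]].
    destruct pb as [r1 [r1' k1]]. destruct pb' as [r2 [r2' k2]].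
    exists (a + - a'). apply Rabs_le_between in ha'. split; [|lra]. split.
    + exists (fun n => s2' (s1 n)), (fun n => s1' (s2 n)).
      eapply good_mono; [apply (good_comp Z S0 S1 d); eauto; apply good_inv; eauto|].
      unfold d; lra.
    + exists (fun n => r2' (r1 n)), (fun n => r1' (r2 n)).
      assert (g := good_comp W S0 S1 d b (-b') r1 r1' r2' r2 hd nb' k1 (good_inv _ _ _ _ _ _ k2)).
      assert (hh : Rabs ((a - a') - (b - b')) < d).
      { apply Rabs_def1; lra. }
      assert (g' := good_pert _ _ _ _ _ _ _ _ g hh).
      replace (a + - a') with (b + - b' + (a - a' - (b - b'))) by ring.
      eapply good_mono; [exact g'|]. unfold d; lra.
  - intros tau [[s [s' gz]] [r [r' gw]]].
    pose proof (good_inv _ _ _ _ _ _ gz) as gz'.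
    pose proof (good_inv _ _ _ _ _ _ gw) as gw'.
    destruct gz as [a1 [a2 a3]]. destruct gw as [b1 [b2 b3]].
    destruct gz' as [_ [_ a4]]. destruct gw' as [_ [_ b4]].
    exists s, s', r, r'. repeat split; auto.
Qed.
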